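(* Every oriented flat twisted link can be represented by a flat twisted braid whose closure is equivalent (isotopic) to the original link. That is, for every oriented flat twisted link diagram $D$ there exist $n\ge1$ and a flat twisted braid $\beta$ on $n$ strands whose closure is equivalent to $D$ under planar isotopy and extended flat twisted Reidemeister moves.
   Context: A flat twisted link diagram is a generic immersion of finitely many (oriented) circles in the plane whose double points are either flat crossings (ordinary crossings with no over/under information) or virtual crossings (drawn encircled), and which may in addition carry finitely many bars, i.e. short segments drawn transversally across the curve at points that are not crossings. Two flat twisted link diagrams are equivalent (isotopic), i.e. represent the same flat twisted link, if related by planar isotopy and a finite sequence of extended flat twisted Reidemeister moves: the moves R1, R2, R3 with flat crossings in place of classical crossings; the virtual moves V1, V2, V3 (analogues of R1–R3 with only virtual crossings) and V4 (an arc containing only virtual crossings passes across a flat crossing); and the twisted moves T1 (a bar slides along an arc through a virtual crossing), T2 (two adjacent bars on the same arc cancel) and T3 with a flat crossing (a flat crossing with one bar on each of its four incident arcs near the crossing is replaced by the configuration in which the two strands cross virtually, then at a flat crossing, then virtually again; in braid notation $b_ib_{i+1}c_ib_{i+1}b_i$ is replaced by $v_ic_iv_i$). A flat twisted braid on $n$ strands is a braid diagram on $n$ monotone strands whose crossings are flat or virtual and whose strands may carry bars; its closure is obtained by joining each top endpoint to the corresponding bottom endpoint by simple arcs in the plane, without new crossings or bars. *)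

(* Defs.v *)
(* Combinatorial (Gauss-code) model of flat twisted link diagrams modulo
   planar isotopy, the virtual moves V1-V4 and the twisted move T1; the
   remaining moves R1, R2, R3, T2, T3 are encoded as local tangle
   replacements. *)
From mathcomp Require Import all_boot.
From Stdlib Require Import Relations.

Set Implicit Arguments.
Unset Strict Implicit.
Unset Printing Implicit Defensive.

(* An event met while travelling along an oriented component:
   [Some (c, r)] : passage through the flat crossing labelled [c];
     [r = true] iff the tangent of this passage is the FIRST vector of the
     positively oriented (counterclockwise) basis formed by the two tangents
     at [c];
   [None] : a bar. *)
Definition event := option (nat * bool).
Definition Cr (c : nat) (r : bool) : event := Some (c, r).
Definition Bar : event := None.

(* A diagram: list of oriented components, each a cyclic word of events. *)
Definition diagram := seq (seq event).

Definition wf (D : diagram) : Prop :=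
  forall c : nat,
    count_mem (Cr c true) (flatten D) = count_mem (Cr c false) (flatten D)
    /\ count_mem (Cr c true) (flatten D) <= 1.

(* A tangle: list of oriented strands (words); strand j of the left-hand
   side of a move has the same endpoints as strand j of the right-hand side. *)
Definition tangle := seq (seq event).

(* Basic moves, in one orientation each. *)
Inductive basic_move : tangle -> tangle -> Prop :=
| MR1 c x : basic_move [:: [:: Cr c x; Cr c (~~ x)]] [:: [::]]
| MR2 a b x : a != b ->
    basic_move [:: [:: Cr a x; Cr b (~~ x)]; [:: Cr a (~~ x); Cr b x]]
               [:: [::]; [::]]
| MR3 p q r : uniq [:: p; q; r] ->
    (* flat braid relation c1 c2 c1 = c2 c1 c2 ; p = AB, q = AC, r = BC *)
    basic_move [:: [:: Cr p true; Cr q true];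
                   [:: Cr p false; Cr r true];
                   [:: Cr q false; Cr r false]]
               [:: [:: Cr q true; Cr p true];
                   [:: Cr r true; Cr p false];
                   [:: Cr r false; Cr q false]]
| MT2 : basic_move [:: [:: Bar; Bar]] [:: [::]]
| MT3 c x :
    (* b_i b_{i+1} c_i b_{i+1} b_i  <->  v_i c_i v_i *)
    basic_move [:: [:: Bar; Cr c x; Bar]; [:: Bar; Cr c (~~ x); Bar]]
               [:: [:: Cr c (~~ x)]; [:: Cr c x]].

(* Re-orienting a tangle: strands j with [nth false s j] are reversed, and
   [m] says whether the whole picture is reflected.  Reversing one of the two
   strands through a crossing swaps the roles at that crossing; a reflection
   swaps all roles. *)
Definition is_label (c : nat) (e : event) : bool :=
  if e is Some (c', _) then c' == c else false.

Definition rev_count (T : tangle) (s : seq bool) (c : nat) : nat :=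
  count (is_label c)
    (flatten [seq nth [::] T j | j <- iota 0 (size T) & nth false s j]).

Definition reorient_ev (T : tangle) (m : bool) (s : seq bool) (e : event)
  : event :=
  if e is Some (c, r) then Some (c, r (+) m (+) odd (rev_count T s c))
  else None.

Definition reorient (m : bool) (s : seq bool) (T : tangle) : tangle :=
  [seq (let w := map (reorient_ev T m s) (nth [::] T j) in
        if nth false s j then rev w else w) | j <- iota 0 (size T)].

(* Templates: a diagram with holes; hole j is where strand j of the tangle
   is inserted. *)
Inductive piece := PEv of event | PHole of nat.

Definition fill (T : tangle) (tpl : seq (seq piece)) : diagram :=
  [seq flatten [seq (match p with PEv e => [:: e] | PHole j => nth [::] T j end)
               | p <- comp] | comp <- tpl].

Definition is_hole (j : nat) (p : piece) : bool :=
  if p is PHole j' then j' == j else false.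

Definition holes_ok (k : nat) (tpl : seq (seq piece)) : Prop :=
  (forall j, j < k -> count (is_hole j) (flatten tpl) = 1) /\
  (forall j, k <= j -> count (is_hole j) (flatten tpl) = 0).

Definition relabel (f : nat -> nat) (D : diagram) : diagram :=
  [seq [seq (if e is Some (c, r) then Some (f c, r) else None) | e <- w]
  | w <- D].

Inductive ft_step : diagram -> diagram -> Prop :=
| St_rot A w B k : ft_step (A ++ w :: B) (A ++ rot k w :: B)
| St_perm D1 D2 : perm_eq D1 D2 -> ft_step D1 D2
| St_relabel f D : injective f -> ft_step D (relabel f D)
| St_move T T' m s tpl :
    basic_move T T' -> holes_ok (size T) tpl ->
    wf (fill (reorient m s T) tpl) -> wf (fill (reorient m s T') tpl) ->
    ft_step (fill (reorient m s T) tpl) (fill (reorient m s T') tpl).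

Definition ft_equiv : diagram -> diagram -> Prop := clos_refl_sym_trans _ ft_step.

(* Braid generators, read bottom to top, strands oriented upward, positions
   0..n-1 numbered from left to right.
   BC i : flat crossing c_i of positions i, i+1 (the strand coming from
          position i goes to position i+1, i.e. passes from lower-left to
          upper-right);
   BV i : virtual crossing v_i;  BB i : bar b_i on the strand at position i. *)
Inductive bgen := BC of nat | BV of nat | BB of nat.

Definition braid := seq bgen.

Definition gen_valid (n : nat) (g : bgen) : bool :=
  match g with BC i | BV i => i.+1 < n | BB i => i < n end.

Definition braid_valid (n : nat) (b : braid) : bool := all (gen_valid n) b.

Definition add_ev (W : seq (seq event)) (s : nat) (e : event) :=
  set_nth [::] W s (rcons (nth [::] W s) e).

Definition swap_pos (pos : seq nat) (i : nat) :=
  set_nth 0 (set_nth 0 pos i (nth 0 pos i.+1)) i.+1 (nth 0 pos i).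

(* [pos]: strand (named by its bottom position) currently at each position;
   [W]: word of each strand so far; [k]: label of the current generator. *)
Fixpoint braid_run (k : nat) (b : braid) (pos : seq nat) (W : seq (seq event))
  : seq nat * seq (seq event) :=
  match b with
  | [::] => (pos, W)
  | g :: b' =>
    match g with
    | BC i => braid_run k.+1 b' (swap_pos pos i)
               (add_ev (add_ev W (nth 0 pos i) (Cr k true))
                       (nth 0 pos i.+1) (Cr k false))
    | BV i => braid_run k.+1 b' (swap_pos pos i) W
    | BB i => braid_run k.+1 b' pos (add_ev W (nth 0 pos i) Bar)
    end
  end.

(* Closure: top position p is joined to bottom position p. *)
Definition braid_closure (n : nat) (b : braid) : diagram :=
  let: (pos, W) := braid_run 0 b (iota 0 n) (nseq n [::]) in
  let next (s : nat) := index s pos in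
  let orbit (s : nat) :=
    let t := traject next s n.+1 in take (index s (behead t)).+1 t in
  [seq flatten [seq nth [::] W j | j <- orbit s]
  | s <- iota 0 n & all (leq s) (orbit s)].

(* Main.v *)
Require Import Defs.
From mathcomp Require Import all_boot zify.
From Stdlib Require Import Relations.

Lemma run_BVs ix k pos W rest :
  braid_run k (map BV ix ++ rest) pos W =
  braid_run (k + size ix) rest (foldl swap_pos pos ix) W.
Proof.
elim: ix k pos => [|i ix IH] k pos /=; first by rewrite addn0.
by rewrite IH addSnnS.
Qed.

Lemma swap_cons x p i : swap_pos (x :: p) i.+1 = x :: swap_pos p i.
Proof. by []. Qed.

Lemma foldl_swap_cons x p ix :
  foldl swap_pos (x :: p) (map S ix) = x :: foldl swap_pos p ix.
Proof. by elim: ix p => [|i ix IH] p //=; rewrite IH. Qed.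

Lemma swap_mid p1 y x p2 :
  swap_pos (p1 ++ y :: x :: p2) (size p1) = p1 ++ x :: y :: p2.
Proof. by elim: p1 => [|z p1 IH] //=; rewrite swap_cons IH. Qed.

Lemma size_swap p i : i.+1 < size p -> size (swap_pos p i) = size p.
Proof.
move=> H; rewrite /swap_pos !size_set_nth; lia.
Qed.

Definition okswaps (n : nat) (ix : seq nat) := all (fun i => i.+1 < n) ix.

Lemma move_front x p2 p1 :
  exists ix, okswaps (size (p1 ++ x :: p2)) ix /\
    foldl swap_pos (p1 ++ x :: p2) ix = x :: p1 ++ p2.
Proof.
elim/last_ind: p1 p2 => [|p1 y IH] p2; first by exists [::].
have [ix [Hok Heq]] := IH (y :: p2).
exists (size p1 :: ix); split.
  rewrite /okswaps /= -cats1 -catA /= size_cat /=.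
  apply/andP; split; first lia.
  move: Hok; rewrite /okswaps; apply: sub_all => i; rewrite !size_cat /= ?size_rcons; lia.
by rewrite /= -cats1 -catA /= swap_mid Heq -catA.
Qed.

Lemma route q : forall pos, perm_eq pos q ->
  exists ix, okswaps (size pos) ix /\ foldl swap_pos pos ix = q.
Proof.
elim: q => [|x q IH] pos Hp.
  by exists [::]; split => //=; case: pos Hp => // a l /perm_size.
have xin : x \in pos by rewrite (perm_mem Hp) mem_head.
have [p1 [p2 Hpos]] : exists p1 p2, pos = p1 ++ x :: p2.
  exists (take (index x pos) pos), (drop (index x pos).+1 pos).
  by rewrite -{1}(cat_take_drop (index x pos) pos) (drop_nth x) ?index_mem // nth_index.
subst pos.
have [ix1 [Hok1 Heq1]] := move_front x p2 p1.
have Hp' : perm_eq (p1 ++ p2) q.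
  rewrite -(perm_cons x); apply: perm_trans Hp.
  by rewrite perm_sym -cat1s perm_catCA.
have [ix2 [Hok2 Heq2]] := IH _ Hp'.
exists (ix1 ++ map S ix2); split.
  rewrite /okswaps all_cat; apply/andP; split; first exact: Hok1.
  rewrite all_map.
  move: Hok2; rewrite /okswaps !size_cat /=.
  by apply: sub_all => i /=; lia.
by rewrite foldl_cat Heq1 foldl_swap_cons Heq2.
Qed.

Lemma nth_add_ev W s e j :
  nth [::] (add_ev W s e) j = if j == s then rcons (nth [::] W s) e else nth [::] W j.
Proof. by rewrite /add_ev nth_set_nth /=; case: eqP => // ->. Qed.

Definition ev_at (sa sb : nat -> nat) (lab : nat -> nat) (j c : nat) : seq event :=
  (if j == sa c then [:: Cr (lab c) true] else [::]) ++
  (if j == sb c then [:: Cr (lab c) false] else [::]).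

Lemma valid_BVs n ix : okswaps n ix -> braid_valid n (map BV ix).
Proof. by rewrite /braid_valid all_map. Qed.

Lemma braid_valid_cat n b1 b2 : braid_valid n (b1 ++ b2) = braid_valid n b1 && braid_valid n b2.
Proof. by rewrite /braid_valid all_cat. Qed.

Lemma cross_run n (sa sb : nat -> nat) cs : uniq cs ->
  (forall c, c \in cs -> [/\ sa c < n, sb c < n & sa c != sb c]) ->
  forall k pos W q, perm_eq pos (iota 0 n) -> perm_eq q (iota 0 n) ->
  exists b (lab : nat -> nat), braid_valid n b /\ {in cs &, injective lab} /\
    (forall c, c \in cs -> k <= lab c) /\
    (braid_run k b pos W).1 = q /\
    forall j, nth [::] (braid_run k b pos W).2 j =
              nth [::] W j ++ flatten [seq ev_at sa sb lab j c | c <- cs].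
Proof.
elim: cs => [|c cs IH] /= Ucs Hcs k pos W q Hpos Hq.
  have [ix [Hok Heq]] := route _ _ (perm_trans Hpos (introT idP (etrans (perm_sym _ _) Hq))).
  exists (map BV ix), id; split; first by apply: valid_BVs; rewrite (perm_size Hpos) size_iota in Hok.
  split; first by [].
  split; first by [].
  have := run_BVs ix k pos W [::]; rewrite cats0 => ->; rewrite Heq /=.
  by split => // j; rewrite cats0.
move/andP: Ucs => [cnin Ucs].
have [Ha Hb Hab] := Hcs c (mem_head _ _).
set a := sa c; set b := sb c.
set t := a :: b :: rem b (rem a (iota 0 n)).
have Ht : perm_eq t (iota 0 n).
  have Ha' : a \in iota 0 n by rewrite mem_iota.
  apply: (@perm_trans _ (a :: rem a (iota 0 n))); last by rewrite perm_sym perm_to_rem.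
  rewrite /t perm_cons perm_sym perm_to_rem // (mem_rem_uniq _ (iota_uniq 0 n)) inE eq_sym Hab /= mem_iota; lia.
have [ix [Hok Heq]] := route _ _ (perm_trans Hpos (introT idP (etrans (perm_sym _ _) Ht))).
set k1 := k + size ix.
set W1 := add_ev (add_ev W a (Cr k1 true)) b (Cr k1 false).
have Ht' : perm_eq (swap_pos t 0) (iota 0 n) by apply: perm_trans Ht; rewrite /t /swap_pos /= perm_sym -(cat1s a) -(cat1s b) perm_catCA.
have [b' [lab' [Hv [Hinj [Hge [Hq' HW]]]]]] :=
  IH Ucs (fun c' Hc' => Hcs c' (mem_behead (s:=c::cs) Hc')) k1.+1 (swap_pos t 0) W1 q Ht' Hq.
exists (map BV ix ++ BC 0 :: b'), (fun x => if x == c then k1 else lab' x).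
have Hrun : braid_run k (map BV ix ++ BC 0 :: b') pos W = braid_run k1.+1 b' (swap_pos t 0) W1
  by rewrite run_BVs Heq.
split.
  rewrite braid_valid_cat valid_BVs /=; last by rewrite (perm_size Hpos) size_iota in Hok.
  by rewrite Hv andbT; lia.
split.
  move=> x y; rewrite !inE => Hx Hy.
  case: (eqVneq x c) => [->|xc]; case: (eqVneq y c) => [->|yc] //=.
  - move=> E; have := Hge y; rewrite -E; move: Hy; rewrite (negbTE yc) /= => Hy /(_ Hy); lia.
  - move=> E; have := Hge x; rewrite E; move: Hx; rewrite (negbTE xc) /= => Hx /(_ Hx); lia.
  - by apply: Hinj; [move: Hx|move: Hy]; rewrite ?(negbTE xc) ?(negbTE yc).
split.
  move=> x; rewrite inE; case: eqP => [_ _|_ /= Hx]; first lia.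
  by have := Hge x Hx; lia.
rewrite Hrun; split => // j.
rewrite HW /W1 !nth_add_ev /ev_at eqxx.
have -> : [seq ev_at sa sb (fun x => if x == c then k1 else lab' x) j c0 | c0 <- cs] =
          [seq ev_at sa sb lab' j c0 | c0 <- cs].
  apply/eq_in_map => x Hx; case: (eqVneq x c) => [E|xc]; first by subst x; rewrite Hx in cnin.
  by rewrite /ev_at (negbTE xc).
rewrite /ev_at -/a -/b.
have Hba : (b == a) = false by rewrite eq_sym (negbTE Hab).
case: (eqVneq j b) => [->|jb]; first by rewrite Hba /= -cats1 -catA.
case: (eqVneq j a) => [->|ja] /=; first by rewrite -cats1 -catA.
done.
Qed.

Fixpoint Tof (D : diagram) : seq (seq event) :=
  if D is w :: D' then [seq [:: e] | e <- w] ++ [::] :: Tof D' else [::].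

Fixpoint qb (o : nat) (D : diagram) : seq nat :=
  if D is w :: D' then (o + size w) :: iota o (size w) ++ qb (o + (size w).+1) D'
  else [::].

Lemma Tof_cat D1 D2 : Tof (D1 ++ D2) = Tof D1 ++ Tof D2.
Proof. by elim: D1 => //= w D1 ->; rewrite -catA. Qed.

Lemma size_Tof_cons w D : size (Tof (w :: D)) = (size w).+1 + size (Tof D).
Proof. by rewrite /= size_cat size_map /= addnS. Qed.

Lemma qb_cat o D1 D2 : qb o (D1 ++ D2) = qb o D1 ++ qb (o + size (Tof D1)) D2.
Proof.
elim: D1 o => [|w D1 IH] o /=; first by rewrite addn0.
rewrite IH /= -catA; do 3 f_equal.
rewrite size_cat size_map /=; congr qb; lia.
Qed.

Lemma qb_perm o D : perm_eq (qb o D) (iota o (size (Tof D))).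
Proof.
elim: D o => [|w D IH] o //=.
rewrite size_cat size_map /=.
have -> : size w + (size (Tof D)).+1 = (size w).+1 + size (Tof D) by lia.
rewrite iotaD -cat_cons; apply: perm_cat; last exact: IH.
by rewrite -addn1 iotaD /= cats1 perm_sym perm_rcons.
Qed.

Section Block.
Variables (D1 D2 : diagram) (w : seq event).
Let D := D1 ++ w :: D2.
Let o := size (Tof D1).
Let m := size w.
Let q := qb 0 D.
Let nx := fun s => index s q.

Lemma nx_block t : t <= m -> nx (o + t) = o + t.+1 %% m.+1.
Proof.
move=> Htm; rewrite /nx /q /D qb_cat index_cat.
have -> : (o + t \in qb 0 D1) = false.
  by rewrite (perm_mem (qb_perm 0 D1)) mem_iota; apply/negbTE; rewrite -/o; lia.
rewrite (perm_size (qb_perm 0 D1)) size_iota -/o add0n /=.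
case: (ltngtP t m) Htm => // [tm|->] _.
  have -> : (o + m == o + t) = false by apply/negbTE; lia.
  rewrite index_cat.
  have Hin : o + t \in iota o m by rewrite mem_iota; lia.
  rewrite Hin modn_small; last lia.
  have -> : o + t = nth 0 (iota o m) t by rewrite nth_iota.
  by rewrite index_uniq ?size_iota ?iota_uniq // addnS.
by rewrite eqxx modnn addn0.
Qed.

Lemma iter_block t i : t <= m -> iter i nx (o + t) = o + (t + i) %% m.+1.
Proof.
move=> Htm; elim: i => [|i IH]; first by rewrite addn0 modn_small.
rewrite iterS IH nx_block; last by have := ltn_pmod (t + i) (ltn0Sn m); lia.
by rewrite -addn1 modnDml addn1 addnS.
Qed.

Lemma mod_small2 t i : t <= m -> i <= m.+1 ->
  (t + i) %% m.+1 = if t + i < m.+1 then t + i else t + i - m.+1.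
Proof.
move=> H1 H2; case: ifP => H; first by rewrite modn_small.
have -> : t + i = (t + i - m.+1) + m.+1 by lia.
by rewrite modnDr modn_small; lia.
Qed.

Definition orb (qq : seq nat) (n s : nat) :=
  let t := traject (fun s => index s qq) s n.+1 in take (index s (behead t)).+1 t.

Lemma orb_block n t : m < n -> t <= m -> orb q n (o + t) = traject nx (o + t) m.+1.
Proof.
move=> Hmn Htm; rewrite /orb -/nx /=.
have -> : n = m + (n - m) by lia.
rewrite trajectD -iterSr iter_block // mod_small2 //.
have -> : (t + m.+1 < m.+1) = false by lia.
have -> : t + m.+1 - m.+1 = t by lia.
have -> : n - m = (n - m).-1.+1 by lia.
rewrite /= index_cat.
have -> : (o + t \in traject nx (nx (o + t)) m) = false.
  apply/negbTE/trajectP => -[i Hi]; rewrite -iterSr iter_block // mod_small2 //; try lia.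
  case: ifP; lia.
have -> : index (o + t) (o + t :: traject nx (nx (o + t)) (n - m).-1) = 0 by rewrite /= eqxx.
by rewrite addn0 take_size_cat.
Qed.

Lemma orb_start n : m < n -> orb q n o = iota o m.+1.
Proof.
move=> Hmn; have := orb_block n 0 Hmn (leq0n m); rewrite addn0 => ->.
apply: (@eq_from_nth _ o); rewrite size_traject ?size_iota // => i Hi.
rewrite nth_traject // nth_iota // -{1}(addn0 o) iter_block // add0n modn_small //.
Qed.

Lemma orb_min n t : m < n -> t <= m -> all (leq (o + t)) (orb q n (o + t)) = (t == 0).
Proof.
move=> Hmn Htm; case: (eqVneq t 0) => [->|t0].
  rewrite addn0 orb_start //; apply/allP => x; rewrite mem_iota; lia.
apply/negbTE/allP => H.
have : o \in orb q n (o + t).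
  rewrite orb_block //; apply/trajectP; exists (m.+1 - t); first lia.
  rewrite iter_block // mod_small2 //; try lia.
  by case: ifP; lia.
by move/H; lia.
Qed.

End Block.

Section Clos.
Variables (D : diagram) (W : seq (seq event)) (h : event -> event).
Let n := size (Tof D).
Let q := qb 0 D.
Hypothesis HW : forall j, j < n -> nth [::] W j = map h (nth [::] (Tof D) j).

Let F s := flatten [seq nth [::] W j | j <- orb q n s].
Let P s := all (leq s) (orb q n s).

Lemma clos_ind D2 : forall D1, D = D1 ++ D2 ->
  [seq F s | s <- iota (size (Tof D1)) (size (Tof D2)) & P s] = [seq map h w | w <- D2].
Proof.
elim: D2 => [|w D2 IH] D1 HD //.
set o := size (Tof D1); set m := size w.
have Hn : o + m.+1 <= n by rewrite /n HD Tof_cat size_cat size_Tof_cons; lia.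
have Hmn : m < n by lia.
rewrite size_Tof_cons iotaD filter_cat map_cat.
have HP : forall t, t <= m -> P (o + t) = (t == 0).
  by move=> t Ht; rewrite /P /q /n HD orb_min // -HD.
have -> : [seq s <- iota o m.+1 | P s] = [:: o].
  rewrite /= -{1}(addn0 o) HP // /=; congr (_ :: _).
  rewrite (eq_in_filter (a2 := pred0)) ?filter_pred0 // => x.
  rewrite mem_iota => Hx /=.
  have -> : x = o + (x - o) by lia.
  rewrite HP; [apply/negbTE|]; lia.
have Ho : size (Tof (rcons D1 w)) = o + m.+1 by rewrite -cats1 Tof_cat size_cat size_Tof_cons /=; lia.
rewrite /= -Ho (IH (rcons D1 w)); last by rewrite HD cat_rcons.
congr (_ :: _).
rewrite /F /q /n HD orb_start //; last by rewrite -HD.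
rewrite (_ : [seq nth [::] W j | j <- _] = [seq map h (nth [::] (Tof D) j) | j <- iota o m.+1]); last first.
  by apply/eq_in_map => j; rewrite mem_iota => Hj; apply: HW; lia.
rewrite (map_comp (map h) (nth [::] (Tof D))) -map_flatten map_nth_iota; last first.
  by rewrite HD Tof_cat size_cat size_Tof_cons; lia.
rewrite HD Tof_cat drop_size_cat //= -cat_rcons take_size_cat; last by rewrite size_rcons size_map.
by rewrite -cats1 flatten_cat flatten_seq1 /= cats0.
Qed.

End Clos.

Lemma closure_eq D b W h :
  braid_run 0 b (iota 0 (size (Tof D))) (nseq (size (Tof D)) [::]) = (qb 0 D, W) ->
  (forall j, j < size (Tof D) -> nth [::] W j = map h (nth [::] (Tof D) j)) ->
  braid_closure (size (Tof D)) b = [seq map h w | w <- D].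
Proof.
move=> Hrun HW.
transitivity [seq flatten [seq nth [::] W j | j <- orb (qb 0 D) (size (Tof D)) s]
             | s <- iota 0 (size (Tof D)) & all (leq s) (orb (qb 0 D) (size (Tof D)) s)].
  by rewrite /braid_closure Hrun.
exact: (@clos_ind D W h HW D [::] erefl).
Qed.

Lemma run_BBs js k W rest n : all (fun j => j < n) js ->
  braid_run k (map BB js ++ rest) (iota 0 n) W =
  braid_run (k + size js) rest (iota 0 n) (foldl (fun W j => add_ev W j Bar) W js).
Proof.
elim: js k W => [|j js IH] k W /=; first by rewrite addn0.
by case/andP => Hj Hall; rewrite nth_iota // add0n IH // addSnnS.
Qed.

Lemma nth_foldl_bars js W j :
  nth [::] (foldl (fun W j => add_ev W j Bar) W js) j = nth [::] W j ++ nseq (count_mem j js) Bar.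
Proof.
elim: js W => [|i js IH] W /=; first by rewrite cats0.
rewrite IH nth_add_ev; case: (eqVneq j i) => [->|ji] /=; last by rewrite add0n.
by rewrite -cats1 -catA.
Qed.

Lemma count_Tof D e : count_mem [:: e] (Tof D) = count_mem e (flatten D).
Proof.
elim: D => //= w D IH; rewrite !count_cat /= IH count_map add0n.
congr (_ + _); apply: eq_count => x /=.
by apply/eqP/eqP => [[]|->].
Qed.

Lemma size_mem_Tof D x : x \in Tof D -> size x <= 1.
Proof.
elim: D => //= w D IH; rewrite mem_cat inE => /orP [/mapP [e _ ->] //|/orP [/eqP -> //|]].
exact: IH.
Qed.

Lemma index_unique (T : eqType) (s : seq T) (x : T) j :
  count_mem x s <= 1 -> j < size s -> nth x s j = x -> index x s = j.
Proof.
move=> Hc Hj Hx.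
have Hs : s = take j s ++ x :: drop j.+1 s by rewrite -{1}(cat_take_drop j s) (drop_nth x) // Hx.
move: Hc; rewrite Hs count_cat /= eqxx index_cat.
have Hsz : size (take j s) = j by rewrite size_take Hj.
case: (boolP (x \in take j s)) => Hin; last by rewrite /= eqxx addn0 Hsz.
by rewrite -has_pred1 has_count in Hin; lia.
Qed.

Lemma flatten_nil (F : nat -> seq event) s : (forall c, c \in s -> F c = [::]) ->
  flatten (map F s) = [::].
Proof.
elim: s => //= c s IH H; rewrite H ?mem_head //=.
by apply: IH => x Hx; apply: H; rewrite inE Hx orbT.
Qed.

Lemma flatten_single (F : nat -> seq event) s c0 : uniq s -> c0 \in s ->
  (forall c, c \in s -> c != c0 -> F c = [::]) -> flatten (map F s) = F c0.
Proof.
elim: s => //= c s IH /andP [cn Us]; rewrite inE => Hc0 H.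
case: (eqVneq c0 c) Hc0 => [E _|ne Hc0] /=.
  subst c0; rewrite flatten_nil ?cats0 // => x Hx; apply: H; first by rewrite inE Hx orbT.
  by apply: contraNneq cn => <-.
rewrite H ?mem_head //=; last by rewrite eq_sym.
by apply: IH => // x Hx; apply: H; rewrite inE Hx orbT.

Qed.

Lemma sum_ge (lab : nat -> nat) (s : seq nat) c : c \in s -> lab c <= foldr (fun x acc => lab x + acc) 0 s.
Proof. elim: s => //= x s IH; rewrite inE => /orP [/eqP ->|/IH]; lia. Qed.

Lemma eq_cr (c c' : nat) (r r' : bool) :
  ([:: (Some (c, r) : event)] == [:: Cr c' r']) = (c == c') && (r == r').
Proof.
by apply/eqP/andP => [[-> ->]|[/eqP -> /eqP ->]].
Qed.

Theorem theorem3 :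
  forall D : diagram, D != [::] -> wf D ->
    exists (n : nat) (b : braid),
      0 < n /\ braid_valid n b /\ ft_equiv (braid_closure n b) D.
Proof.
move=> D HD Hwf.
set T := Tof D; set n := size T.
set cs := undup (pmap (fun e : event => omap fst e) (flatten D)).
pose sa c := index [:: Cr c true] T; pose sb c := index [:: Cr c false] T.
have Hcnt : forall c r, c \in cs -> count_mem (Cr c r) (flatten D) = 1.
  move=> c r; rewrite mem_undup mem_pmap => /mapP [e He Ee].
  case: e He Ee => [[c' r']|] //= He [Ec]; subst c'.
  have [E1 E2] := Hwf c.
  have Hpos : 0 < count_mem (Cr c r') (flatten D) by rewrite -has_count has_pred1.
  by case: r; case: r' He Hpos => He Hpos; rewrite -?E1 in Hpos *; apply/eqP; rewrite eqn_leq E2 Hpos.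
have HcntT : forall c r, c \in cs -> count_mem [:: Cr c r] T = 1.
  by move=> c r Hc; rewrite /T count_Tof Hcnt.
have HinT : forall c r, c \in cs -> [:: Cr c r] \in T.
  by move=> c r Hc; rewrite -has_pred1 has_count HcntT.
have Hcs : forall c, c \in cs -> [/\ sa c < n, sb c < n & sa c != sb c].
  move=> c Hc; split; rewrite ?index_mem ?HinT //.
  apply/eqP => E.
  have := nth_index [::] (HinT c true Hc); rewrite -/(sa c) E /sb nth_index ?HinT //.
have Hsa : forall c j, c \in cs -> j < n -> forall r,
    (j == index [:: Cr c r] T) = (nth [::] T j == [:: Cr c r]).
  move=> c j Hc Hj r; apply/eqP/eqP => [->|E]; first by rewrite nth_index ?HinT.
  rewrite (@index_unique _ T [:: Cr c r] j) // ?HcntT // (set_nth_default [::]) //.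
set bars := [seq j <- iota 0 n | nth [::] T j == [:: Bar]].
set W0 := foldl (fun W j => add_ev W j Bar) (nseq n [::]) bars.
have [b' [lab [Hv [Hinj [_ [Hq HW]]]]]] :=
  cross_run n sa sb cs (undup_uniq _) Hcs (size bars) (iota 0 n) W0 (qb 0 D)
            (perm_refl _) (qb_perm 0 D).
pose f x := if x \in cs then lab x else x + (foldr (fun x acc => lab x + acc) 0 cs).+1.
have Hf : injective f.
  move=> x y; rewrite /f.
  case: (boolP (x \in cs)) => Hx; case: (boolP (y \in cs)) => Hy.
  - exact: Hinj.
  - by have := @sum_ge lab cs x Hx; lia.
  - by have := @sum_ge lab cs y Hy; lia.
  - lia.
pose h (e : event) : event := if e is Some (c, r) then Some (f c, r) else None.
have Hbars : all (fun j => j < n) bars.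
  by apply/allP => j; rewrite mem_filter mem_iota => /andP [_ /andP [_]].
have Hrun : braid_run 0 (map BB bars ++ b') (iota 0 n) (nseq n [::]) =
            (qb 0 D, (braid_run (size bars) b' (iota 0 n) W0).2).
  by rewrite run_BBs // add0n -Hq -surjective_pairing.
have HWf : forall j, j < n ->
    nth [::] (braid_run (size bars) b' (iota 0 n) W0).2 j = map h (nth [::] T j).
  move=> j Hj; rewrite HW /W0 nth_foldl_bars nth_nseq if_same /=.
  rewrite count_uniq_mem ?filter_uniq ?iota_uniq // mem_filter mem_iota /= Hj andbT.
  have Hev : forall c, c \in cs -> ev_at sa sb lab j c =
      (if nth [::] T j == [:: Cr c true] then [:: Cr (lab c) true] else [::]) ++
      (if nth [::] T j == [:: Cr c false] then [:: Cr (lab c) false] else [::]).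
    by move=> c Hc; rewrite /ev_at /sa /sb !Hsa.
  have Hx : nth [::] T j \in T := mem_nth [::] Hj.
  have Hsz := @size_mem_Tof D _ Hx.
  case E: (nth [::] T j) Hsz => [|e x'] Hsz.
    by rewrite /=; apply: flatten_nil => c Hc; rewrite Hev // E.
  case: x' E Hsz => [|e' x'] E Hsz; last by [].
  clear Hsz.
  case: e E => [[c0 r]|] E.
    have Hc0 : c0 \in cs.
      rewrite mem_undup mem_pmap; apply/mapP; exists (Some (c0, r)) => //.
      by rewrite -has_pred1 has_count -count_Tof -/T -E -has_count has_pred1.
    rewrite /= (@flatten_single _ cs c0) ?undup_uniq //.
      by rewrite Hev // E /f Hc0; case: r E => E; rewrite !eq_cr !eqxx.
    by move=> c Hc ne; rewrite Hev // E !eq_cr eq_sym (negbTE ne).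
  by rewrite /=; congr (_ :: _); apply: flatten_nil => c Hc; rewrite Hev // E.
exists n, (map BB bars ++ b'); split.
  have Hn0 : forall D0 : diagram, D0 != [::] -> 0 < size (Tof D0).
    by case=> // w D' _; rewrite size_Tof_cons.
  exact: Hn0 D HD.
split.
  by rewrite braid_valid_cat Hv andbT /braid_valid all_map.
have -> : braid_closure n (map BB bars ++ b') = relabel f D.
  have := @closure_eq D (map BB bars ++ b') _ h Hrun HWf.
  by move=> ->.
rewrite /ft_equiv; apply: rst_sym; apply: rst_step; exact: St_relabel.
Qed.
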